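(* If $B,C\in \mathcal{B}_{A}(\mathcal{H})$, then \begin{align*} d\omega _{A_{0}}^{2}\left( \begin{bmatrix} 0 & B \\ C & 0 \end{bmatrix} \right) &\leq \frac{1}{2}\max \left\{ \omega _{A}\left( \left( C^{\sharp _{A}}C\right) ^{2}+C^{\sharp _{A}}C\right) ,\omega _{A}\left( B^{\sharp _{A}}B+ \left( B^{\sharp _{A}}B\right) ^{2} \right) \right\} \\ &\quad+\frac{1}{2}\max \left\{ \omega _{A}\left( \left( C^{\sharp _{A}}C\right) ^{2}-C^{\sharp _{A}}C\right), \omega _{A}\left( B^{\sharp _{A}}B-\left( B^{\sharp _{A}}B\right) ^{2} \right) \right\} \\ &\quad +\omega _{A_{0}}\left( \begin{bmatrix} 0 & C^{\sharp _{A}}CB \\ B^{\sharp _{A}}BC & 0 \end{bmatrix} \right). \end{align*}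
   Context: $\mathcal{H}$ is a complex Hilbert space and $A\in\mathcal{B}(\mathcal{H})$ is a positive operator; $\langle x,z\rangle_A=\langle Ax,z\rangle$ and $\|z\|_A=\|A^{1/2}z\|$. $\mathcal{B}_A(\mathcal{H})$ denotes the set of bounded operators $S$ on $\mathcal{H}$ admitting an $A$-adjoint; $S^{\sharp_A}=A^{\dagger}S^*A$ is the distinguished $A$-adjoint ($A^\dagger$ the Moore-Penrose inverse). $\omega_A(S)=\sup\{|\langle Sz,z\rangle_A|:\|z\|_A=1\}$ is the $A$-numerical radius. $A_0=\begin{bmatrix} A&0\\0&A\end{bmatrix}$ on $\mathcal{H}\oplus\mathcal{H}$ induces $\langle x,z\rangle_{A_0}=\langle x_1,z_1\rangle_A+\langle x_2,z_2\rangle_A$; $\omega_{A_0}$ is the $A_0$-numerical radius and $d\omega_{A_0}(X)=\sup\{(|\langle Xz,z\rangle_{A_0}|^2+\|Xz\|_{A_0}^4)^{1/2}:\|z\|_{A_0}=1\}$ is the $A_0$-Davis-Wielandt radius. *)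

(* Defs.v *)
From HB Require Import structures.
From mathcomp Require Import all_boot all_order all_algebra.
From mathcomp Require Import boolp classical_sets reals.
From mathcomp Require Import complex.
From Stdlib Require Import ClassicalEpsilon.

Set Implicit Arguments.
Unset Strict Implicit.
Unset Printing Implicit Defensive.

Import Order.TTheory GRing.Theory Num.Theory.
Local Open Scope ring_scope.
Local Open Scope classical_set_scope.

Section Hilbert.
Variables (R : realType) (V : lmodType R[i]) (ip : V -> V -> R[i]).

Definition is_inner_product : Prop :=
  (forall (a : R[i]) (x y z : V), ip (a *: x + y) z = a * ip x z + ip y z) /\
  (forall x y : V, ip y x = (ip x y)^*) /\
  (forall x : V, 0 <= ip x x) /\
  (forall x : V, ip x x = 0 -> x = 0).

Definition ipnorm (x : V) : R := Num.sqrt (complex.Re (ip x x)).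

Definition is_complete : Prop :=
  forall u : nat -> V,
    (forall e : R, 0 < e -> exists N : nat, forall m n : nat,
        (N <= m)%N -> (N <= n)%N -> ipnorm (u m - u n) < e) ->
    exists l : V, forall e : R, 0 < e -> exists N : nat, forall n : nat,
        (N <= n)%N -> ipnorm (u n - l) < e.

Definition is_hilbert : Prop := is_inner_product /\ is_complete.

Definition is_linear_op (T : V -> V) : Prop :=
  forall (a : R[i]) (x y : V), T (a *: x + y) = a *: T x + T y.

Definition is_bounded_op (T : V -> V) : Prop :=
  is_linear_op T /\ exists M : R, forall x : V, ipnorm (T x) <= M * ipnorm x.

Definition is_positive_op (A : V -> V) : Prop :=
  is_bounded_op A /\ forall x : V, 0 <= ip (A x) x.

(* the Hilbert-space adjoint S^* (it exists and is unique for bounded S on a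
   Hilbert space; chosen by classical choice) *)
Definition adjoint (S : V -> V) : V -> V :=
  epsilon (inhabits (fun x : V => x))
    (fun T : V -> V => forall x y : V, ip (S x) y = ip x (T y)).

(* Moore-Penrose inverse of A: on its domain R(A) (+) R(A)^perp, A^dagger w is
   the unique u in N(A)^perp with A u = P_{closure R(A)} w, i.e. with
   A u - w orthogonal to R(A).  (Outside the domain the value is irrelevant.) *)
Definition mp_inverse (A : V -> V) (w : V) : V :=
  epsilon (inhabits (0 : V))
    (fun u : V => (forall n : V, A n = 0 -> ip u n = 0) /\
                  (forall z : V, ip (A u - w) (A z) = 0)).

Definition sharpA (A S : V -> V) : V -> V :=
  fun x => mp_inverse A (adjoint S (A x)).

Definition ipA (A : V -> V) (x z : V) : R[i] := ip (A x) z.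
Definition normA (A : V -> V) (z : V) : R := Num.sqrt (complex.Re (ipA A z z)).

Definition in_BA (A S : V -> V) : Prop :=
  is_bounded_op S /\
  exists X : V -> V, is_bounded_op X /\
    forall x y : V, ipA A (S x) y = ipA A x (X y).

Definition omegaA (A S : V -> V) : R :=
  sup [set complex.Re `|ipA A (S z) z| | z in [set z | normA A z = 1]].

Definition ipA0 (A : V -> V) (x z : V * V) : R[i] :=
  ipA A x.1 z.1 + ipA A x.2 z.2.
Definition normA0 (A : V -> V) (z : V * V) : R :=
  Num.sqrt (complex.Re (ipA0 A z z)).

Definition omegaA0 (A : V -> V) (X : V * V -> V * V) : R :=
  sup [set complex.Re `|ipA0 A (X z) z| | z in [set z | normA0 A z = 1]].

Definition dwA0 (A : V -> V) (X : V * V -> V * V) : R :=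
  sup [set Num.sqrt (complex.Re `|ipA0 A (X z) z| ^+ 2 + normA0 A (X z) ^+ 4)
      | z in [set z | normA0 A z = 1]].

End Hilbert.

Definition offdiag (V : Type) (B C : V -> V) : V * V -> V * V :=
  fun z => (B z.2, C z.1).

(* Main.v *)
Require Import Defs.
From HB Require Import structures.
From mathcomp Require Import all_boot all_order all_algebra.
From mathcomp Require Import boolp classical_sets reals.
From mathcomp Require Import complex.
From mathcomp Require Import ring lra.
From Stdlib Require ClassicalEpsilon.

Set Implicit Arguments.
Unset Strict Implicit.
Unset Printing Implicit Defensive.
Import Order.TTheory GRing.Theory Num.Theory.
Local Open Scope complex_scope.
Local Open Scope ring_scope.

Section Basic.
Variable R : realType.
Local Notation C := R[i].

Definition mc (z : C) : R := complex.Re `|z|.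

Lemma normE (z : C) : `|z| = (mc z)%:C.
Proof. by case: z. Qed.

Lemma conjR (t : R) : (t%:C)^* = t%:C :> C.
Proof. exact: conjc_real. Qed.

Lemma ReC (t : R) : complex.Re (t%:C) = t.
Proof. by []. Qed.

Lemma mc_ge0 z : 0 <= mc z.
Proof. by case: z => a b; rewrite /mc /=; apply: sqrtr_ge0. Qed.

Lemma mc2 z : (mc z ^+ 2)%:C = z * z^*.
Proof. by rewrite rmorphXn /= -normE normCK. Qed.

Lemma mc2' z : (mc z)%:C * (mc z)%:C = z * z^*.
Proof. by rewrite -rmorphM /= -expr2 mc2. Qed.

Lemma ReJ' (x : C) : (complex.Re x)%:C = (x + x^*) / 2.
Proof. exact: ReJ_add. Qed.

Lemma mc2R z : mc z ^+ 2 = complex.Re z ^+ 2 + complex.Im z ^+ 2.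
Proof. case: z => a b; rewrite /mc /= sqr_sqrtr //; apply: addr_ge0; apply: sqr_ge0. Qed.

Lemma Re_le_mc z : complex.Re z <= mc z.
Proof.
have h := mc_ge0 z.
case: (lerP (complex.Re z) 0) => hr; first by apply: le_trans h.
rewrite -(ler_pXn2r (n := 2)) // ?nnegrE ?(ltW hr) //.
rewrite mc2R lerDl; apply: sqr_ge0.
Qed.

Lemma mcR t : 0 <= t -> mc t%:C = t.
Proof. by move=> h; rewrite /mc /= expr0n /= addr0 sqrtr_sqr ger0_norm. Qed.

Lemma mcM a b : mc (a * b) = mc a * mc b.
Proof.
have := normrM a b; rewrite !normE -rmorphM /=. by case.
Qed.

Lemma mcJ a : mc (a^*) = mc a.
Proof. by have := normCK a; rewrite /mc; rewrite -norm_conjC. Qed.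

Lemma ge0_real (z : C) : 0 <= z -> z = (complex.Re z)%:C.
Proof. move=> h; have := ger0_Im h; case: z h => a b /= _ ->; done. Qed.

Lemma ge0_Re (z : C) : 0 <= z -> 0 <= complex.Re z.
Proof. by move=> h; move: h; rewrite lecE => /andP[]. Qed.

Lemma mc0 z : mc z = 0 -> z = 0.
Proof. by move=> h; apply/normr0_eq0; rewrite normE h. Qed.

End Basic.
Arguments mc {R}.

Lemma real_CS (R : realType) (Q G N : R) : 0 <= Q -> 0 <= G -> 0 <= N ->
  (forall t, 0 <= Q + 2 * t * N + t ^+ 2 * N * G) -> N <= Q * G.
Proof.
move=> hQ hG hN H.
have [N0|Np] := eqVneq N 0; first by rewrite N0 mulr_ge0.
have Npos : 0 < N by rewrite lt_def Np hN.
have [G0|Gp] := eqVneq G 0.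
  have := H (- (Q + 1) / (2 * N)).
  rewrite G0 mulr0 addr0.
  have -> : 2 * (- (Q + 1) / (2 * N)) * N = - (Q + 1) by field; rewrite ?Np ?pnatr_eq0.
  lra.
have Gpos : 0 < G by rewrite lt_def Gp hG.
have := H (- G^-1).
have -> : Q + 2 * - G^-1 * N + (- G^-1) ^+ 2 * N * G = (Q * G - N) / G by field.
rewrite pmulr_lge0 ?invr_gt0 //; lra.
Qed.

Definition qnorm (R : realType) (W : lmodType R[i]) (q : W -> W -> R[i]) x := complex.Re (q x x).

Definition sip (R : realType) (W : lmodType R[i]) (q : W -> W -> R[i]) :=
  (forall a x y z, q (a *: x + y) z = a * q x z + q y z) /\
  (forall x y, q y x = (q x y)^*) /\
  (forall x, 0 <= q x x).

Section SIP.
Variables (R : realType) (W : lmodType R[i]) (q : W -> W -> R[i]).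
Variable hq : sip q.
Local Notation qn := (qnorm q).
Let qlin : forall a x y z, q (a *: x + y) z = a * q x z + q y z.
Proof. by case: hq. Qed.
Let qherm : forall x y, q y x = (q x y)^*.
Proof. by case: hq => _ []. Qed.
Let qpos : forall x, 0 <= q x x.
Proof. by case: hq => _ []. Qed.

Lemma sip_herm x y : q y x = (q x y)^*.
Proof using hq. exact: qherm. Qed.
Lemma sip_lin a x y z : q (a *: x + y) z = a * q x z + q y z.
Proof using hq. exact: qlin. Qed.
Lemma sip_pos x : 0 <= q x x.
Proof using hq. exact: qpos. Qed.

Lemma q0l z : q 0 z = 0.
Proof using hq. by have := qlin (-1) z z z; rewrite scaleN1r addNr mulN1r addNr. Qed.
Lemma qaddl x y z : q (x + y) z = q x z + q y z.
Proof using hq. by have := qlin 1 x y z; rewrite scale1r mul1r. Qed.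
Lemma qscalel a x z : q (a *: x) z = a * q x z.
Proof using hq. by have := qlin a x 0 z; rewrite addr0 q0l addr0. Qed.
Lemma qoppl x z : q (- x) z = - q x z.
Proof using hq. by rewrite -scaleN1r qscalel mulN1r. Qed.
Lemma qsubl x y z : q (x - y) z = q x z - q y z.
Proof using hq. by rewrite qaddl qoppl. Qed.
Lemma q0r z : q z 0 = 0.
Proof using hq. by rewrite qherm q0l conjC0. Qed.
Lemma qaddr x y z : q z (x + y) = q z x + q z y.
Proof using hq. by rewrite qherm qaddl rmorphD /= -!qherm. Qed.
Lemma qscaler a x z : q z (a *: x) = a^* * q z x.
Proof using hq. by rewrite qherm qscalel rmorphM /= -qherm. Qed.
Lemma qoppr x z : q z (- x) = - q z x.
Proof using hq. by rewrite -scaleN1r qscaler rmorphN1 mulN1r. Qed.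
Lemma qsubr x y z : q z (x - y) = q z x - q z y.
Proof using hq. by rewrite qaddr qoppr. Qed.


Lemma qn_ge0 x : 0 <= qn x. Proof using hq. exact: ge0_Re. Qed.
Lemma qnE x : q x x = (qn x)%:C. Proof using hq. exact: ge0_real. Qed.

Lemma qexp u v t : q (u + (t%:C * q u v) *: v) (u + (t%:C * q u v) *: v) =
   (qn u + 2 * t * mc (q u v) ^+ 2 + t ^+ 2 * mc (q u v) ^+ 2 * qn v)%:C.
Proof using hq.
  set c := q u v.
  rewrite !qaddl !qaddr !qscalel !qscaler !qnE.
  rewrite [q v u]qherm -/c rmorphM /= conjR.
  rewrite !rmorphD !rmorphM /= mc2'.
  have -> : (2%:C : R[i]) = 2 by rewrite rmorphMn /= rmorph1.
  ring.
Qed.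

Lemma qCS u v : mc (q u v) ^+ 2 <= qn u * qn v.
Proof using hq.
apply: real_CS; [exact: qn_ge0| exact: qn_ge0| exact: sqr_ge0 |].
move=> t.
by have := qpos (u + (t%:C * q u v) *: v); rewrite qexp ler0c.
Qed.

Lemma qpar u v : qn (u + v) + qn (u - v) = 2 * qn u + 2 * qn v.
Proof using hq.
have E : q (u + v) (u + v) + q (u - v) (u - v) = q u u + q u u + (q v v + q v v).
  rewrite !qsubl !qaddl !qsubr !qaddr; ring.
have := congr1 (@complex.Re R) E; rewrite /qnorm !raddfD /= => ->; lra.
Qed.

Lemma qtri u v : qn (u + v) <= qn u + qn v + 2 * mc (q u v).
Proof using hq.
have E : q (u + v) (u + v) = q u u + q v v + (q u v + (q u v)^*).
  rewrite !qaddl !qaddr [q v u]qherm; ring.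
rewrite /qnorm E !raddfD /= -/(qn u) -/(qn v).
have := Re_le_mc (q u v).
have -> : complex.Re ((q u v)^*) = complex.Re (q u v) by case: (q u v).
lra.
Qed.

Lemma qn_scale (a : R[i]) u : qn (a *: u) = mc a ^+ 2 * qn u.
Proof using hq.
rewrite /qnorm qscalel qscaler qnE mulrA -mc2 -rmorphM /=; done.
Qed.


Lemma qCS0 u v : qn u = 0 -> q u v = 0.
Proof using hq.
move=> h; apply: mc0.
have := qCS u v; rewrite h mul0r => h2.
have h3 : mc (q u v) ^+ 2 = 0 by apply/eqP; rewrite eq_le h2 sqr_ge0.
by move/eqP: h3; rewrite expf_eq0 /= => /eqP.
Qed.

Lemma qCSr u v : qn v = 0 -> q u v = 0.
Proof using hq. by move=> h; rewrite qherm qCS0 // conjC0. Qed.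

Lemma bombieri a b e : qn e = 1 ->
  mc (q a e) ^+ 2 + mc (q b e) ^+ 2 <=
  Num.max (qn a) (qn b) + mc (q a b).
Proof using hq.
move=> he.
set al := q a e; set be := q b e.
set T := mc al ^+ 2 + mc be ^+ 2.
set w := al^* *: a + be^* *: b.
have Ew : q w e = T%:C.
  rewrite /w qaddl !qscalel -/al -/be rmorphD /=.
rewrite !mc2. ring.
have hT : 0 <= T by rewrite addr_ge0 // sqr_ge0.
have cs := qCS w e.
rewrite Ew mcR // he mulr1 in cs.
set z := al^* * be * q a b.
have Eww : q w w = (mc al ^+ 2 * qn a + mc be ^+ 2 * qn b + 2 * complex.Re z)%:C.
  rewrite /w !qaddl !qaddr !qscalel !qscaler !qnE [q b a]qherm.
  rewrite !rmorphD !rmorphM /= !mc2' !conjCK.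
  have -> : (2%:C : R[i]) = 2 by rewrite rmorphMn /= rmorph1.
  rewrite /z (ReJ' (al^* * be * q a b)) !rmorphM /= !conjCK.
  by field.
rewrite /qnorm Eww ReC in cs.
have hz : complex.Re z <= mc al * mc be * mc (q a b).
  by apply: le_trans (Re_le_mc z) _; rewrite /z !mcM mcJ.
have ha := qn_ge0 a; have hb := qn_ge0 b.
have hal := mc_ge0 al; have hbe := mc_ge0 be; have hab := mc_ge0 (q a b).
set M := Num.max (qn a) (qn b).
have hMa : qn a <= M by rewrite le_max lexx.
have hMb : qn b <= M by rewrite le_max lexx orbT.
set P := mc (q a b).
have key : T ^+ 2 <= T * (M + P).
  apply: le_trans cs _.
  rewrite /T.
  have h2 : 2 * (mc al * mc be * P) <= (mc al ^+ 2 + mc be ^+ 2) * P.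
    have := mulr_ge0 (sqr_ge0 (mc al - mc be)) hab; rewrite /P; nra.
  have h3 : mc al ^+ 2 * qn a <= mc al ^+ 2 * M by apply: ler_wpM2l => //; apply: sqr_ge0.
  have h4 : mc be ^+ 2 * qn b <= mc be ^+ 2 * M by apply: ler_wpM2l => //; apply: sqr_ge0.
  rewrite /P in h2 *. nra.
have [T0|Tp] := eqVneq T 0; first by rewrite T0 addr_ge0 // le_max ha.
have Tpos : 0 < T by rewrite lt_def Tp hT.
by rewrite expr2 ler_pM2l in key.
Qed.

End SIP.

Lemma small_inv (R : realType) (d : R) : 0 < d ->
  exists N : nat, forall n : nat, (N <= n)%N -> (n.+1%:R)^-1 < d.
Proof.
move=> hd.
have h0 : 0 <= d^-1 by rewrite invr_ge0 ltW.
exists (Num.Def.archi_bound d^-1) => n hn.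
have h1 := archi_boundP h0.
have h2 : (Num.Def.archi_bound d^-1)%:R <= n.+1%:R :> R.
  by rewrite ler_nat; apply: leq_trans hn _.
rewrite -[d]invrK ltf_pV2 ?posrE ?invr_gt0 ?ltr0Sn //.
exact: lt_le_trans h1 h2.
Qed.

Section LinOp.
Variables (R : realType) (V : lmodType R[i]) (T : V -> V).
Hypothesis hT : is_linear_op T.
Lemma lin0 : T 0 = 0.
Proof. by have := hT (-1) 0 0; rewrite scaleN1r oppr0 add0r scaleN1r addNr. Qed.
Lemma linD x y : T (x + y) = T x + T y.
Proof. by have := hT 1 x y; rewrite !scale1r. Qed.
Lemma linZ a x : T (a *: x) = a *: T x.
Proof. by have := hT a x 0; rewrite !addr0 lin0 addr0. Qed.
Lemma linN x : T (- x) = - T x.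
Proof. by rewrite -scaleN1r linZ scaleN1r. Qed.
Lemma linB x y : T (x - y) = T x - T y.
Proof. by rewrite linD linN. Qed.
End LinOp.

Section Hilb.
Variables (R : realType) (V : lmodType R[i]) (ip : V -> V -> R[i]).
Hypothesis Hip : is_inner_product ip.
Hypothesis Hcomp : is_complete ip.

Lemma sip_ip : sip ip.
Proof. by case: Hip => [h1 [h2 [h3 _]]]; split. Qed.
Local Notation hip := sip_ip.
Local Notation qn := (qnorm ip).

Lemma ip_def x : qn x = 0 -> x = 0.
Proof.
case: Hip => [_ [_ [_ h4]]] h; apply: h4; rewrite (qnE hip) h; done.
Qed.

Lemma conv_qn (u : nat -> V) l :
  (forall e : R, 0 < e -> exists N : nat, forall n : nat,
        (N <= n)%N -> ipnorm ip (u n - l) < e) ->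
  forall e : R, 0 < e -> exists N : nat, forall n : nat, (N <= n)%N -> qn (u n - l) < e.
Proof.
move=> H e he.
have hs : 0 < Num.sqrt e by rewrite sqrtr_gt0.
have [N HN] := H (Num.sqrt e) hs.
exists N => n hn; have := HN n hn.
by rewrite /ipnorm ltr_sqrt.
Qed.

Lemma qn_lt_ipnorm y e : 0 < e -> qn y < e ^+ 2 -> ipnorm ip y < e.
Proof.
move=> he h; rewrite /ipnorm.
have he2 : 0 < e ^+ 2 by rewrite exprn_gt0.
by rewrite -(ltr_sqrt (qn y) he2) sqrtr_sqr gtr0_norm in h.
Qed.

Lemma qn_opp y : qn (- y) = qn y.
Proof.
rewrite -scaleN1r (qn_scale hip).
have -> : mc (-1 : R[i]) = 1 by rewrite /mc normrN1.
by rewrite expr1n mul1r.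
Qed.

Definition closed_sub (M : V -> Prop) :=
  M 0 /\ (forall (a : R[i]) x y, M x -> M y -> M (a *: x + y)) /\
  (forall (u : nat -> V) l, (forall n, M (u n)) ->
     (forall e : R, 0 < e -> exists N : nat, forall n : nat,
        (N <= n)%N -> ipnorm ip (u n - l) < e) -> M l).

Lemma proj M (hM : closed_sub M) x :
  exists p, M p /\ forall m, M m -> ip (x - p) m = 0.
Proof.
case: hM => [M0 [Mlin Mcl]].
have Madd : forall y z, M y -> M z -> M (y + z).
  by move=> y z hy hz; have := Mlin 1 y z hy hz; rewrite scale1r.
have Mscale : forall a y, M y -> M (a *: y).
  by move=> a y hy; have := Mlin a y 0 hy M0; rewrite addr0.
pose S := [set qn (x - m) | m in M]%classic.
have S0 : (S !=set0)%classic by exists (qn (x - 0)); exists 0.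
have Slb : lbound S 0 by move=> r [m _ <-]; exact: (qn_ge0 hip).
have hinf : has_inf S by split => //; exists 0.
set d := inf S.
have hd0 : 0 <= d by exact: lb_le_inf.
have hdle : forall m, M m -> d <= qn (x - m).
  by move=> m hm; apply: ge_inf; [exists 0 | exists m].
have hseq : forall n : nat, exists m, M m /\ qn (x - m) < d + (n.+1%:R)^-1.
  move=> n; have he : 0 < (n.+1%:R : R)^-1 by rewrite invr_gt0 ltr0Sn.
  have [r [m hm <-] hr] := inf_adherent he hinf.
  by exists m.
have [ms Hms] := choice hseq.
have Mms n : M (ms n) by case: (Hms n).
have Hd n : qn (x - ms n) < d + (n.+1%:R)^-1 by case: (Hms n).
have Hcb : forall n k, qn (ms n - ms k) <= 2 * (n.+1%:R)^-1 + 2 * (k.+1%:R)^-1.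
  move=> n k.
  set u := x - ms k; set v := x - ms n.
  have hpar := qpar hip u v.
  have e1 : u - v = ms n - ms k by rewrite /u /v opprB addrC addrA subrK.
  set mid := (2^-1 : R[i]) *: (ms n + ms k).
  have e2 : u + v = (2 : R[i]) *: (x - mid).
    rewrite /mid scalerBr scalerA divff ?pnatr_eq0 // scale1r.
    rewrite /u /v scaler_nat mulr2n addrACA -opprD [ms k + _]addrC.
    done.
  have e3 : qn (u + v) = 4 * qn (x - mid).
    rewrite e2 (qn_scale hip).
    have -> : mc (2 : R[i]) = 2.
      have -> : (2 : R[i]) = (2 : R)%:C by rewrite rmorphMn /= rmorph1.
      by rewrite mcR.
    by rewrite expr2 -natrM.
  have hmid : d <= qn (x - mid) by apply: hdle; rewrite /mid; apply: Mscale; apply: Madd.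
  have hu := Hd k; have hv := Hd n.
  rewrite e1 e3 in hpar.
  rewrite -/u in hu; rewrite -/v in hv.
  set a := (n.+1%:R)^-1 in hv *; set b := (k.+1%:R)^-1 in hu *.
  lra.
have Hcauchy : forall e : R, 0 < e -> exists N : nat, forall m n : nat,
        (N <= m)%N -> (N <= n)%N -> ipnorm ip (ms m - ms n) < e.
  move=> e he.
  have he4 : 0 < e ^+ 2 / 4 by rewrite divr_gt0 // exprn_gt0.
  have [N HN] := small_inv he4.
  exists N => m n hm hn.
  apply: qn_lt_ipnorm => //.
  apply: le_lt_trans (Hcb m n) _.
  have := HN m hm; have := HN n hn.
  set a := (n.+1%:R)^-1; set b := (m.+1%:R)^-1; set E := e ^+ 2. lra.
have [p Hp] := Hcomp Hcauchy.
have Mp : M p := Mcl ms p Mms Hp.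
have Hpq := conv_qn Hp.
have hpd : qn (x - p) <= d.
  apply/ler_addgt0Pr => eps heps.
  have e3 : 0 < eps / 3 by rewrite divr_gt0.
  have [N1 HN1] := small_inv e3.
  have [N2 HN2] := Hpq _ e3.
  have hd1 : 0 < d + 1 by lra.
  have e6 : 0 < (eps / 6) ^+ 2 / (d + 1) by rewrite divr_gt0 // exprn_gt0 // divr_gt0.
  have [N3 HN3] := Hpq _ e6.
  set n := (N1 + N2 + N3)%N.
  have h1 := HN1 n (leq_trans (leq_addr N2 N1) (leq_addr N3 _)).
  have h2 := HN2 n (leq_trans (leq_addl N1 N2) (leq_addr N3 _)).
  have h3 := HN3 n (leq_addl _ N3).
  have E : x - p = (x - ms n) + (ms n - p) by rewrite addrA subrK.
  have ht := qtri hip (x - ms n) (ms n - p).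
  have hcs := qCS hip (x - ms n) (ms n - p).
  rewrite -E in ht.
  have hx := Hd n.
  have hinv : (n.+1%:R : R)^-1 <= 1 by rewrite invf_le1 ?ler1n ?ltr0Sn.
  set a := (n.+1%:R : R)^-1 in hx h1 hinv.
  set s := qn (ms n - p) in h2 h3 ht hcs.
  set r := mc (ip (x - ms n) (ms n - p)) in ht hcs.
  set y := qn (x - ms n) in hx ht hcs.
  have hy0 : 0 <= y := qn_ge0 hip _.
  have hs0 : 0 <= s := qn_ge0 hip _.
  have hr0 : 0 <= r := mc_ge0 _.
  have hr2 : r ^+ 2 < (eps / 6) ^+ 2.
    have hb : y * s <= (d + 1) * s by apply: ler_wpM2r => //; lra.
    have hc : (d + 1) * s < (eps / 6) ^+ 2 by rewrite mulrC -ltr_pdivlMr.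
    exact: (le_lt_trans (le_trans hcs hb) hc).
  have hr : r < eps / 6.
    by rewrite -(ltr_pXn2r (n := 2)) // ?nnegrE // ltW // divr_gt0.
  lra.
have Hort : forall m, M m -> ip (x - p) m = 0.
  move=> m hm.
  set c := ip (x - p) m.
  set Q := qn m.
  have hQ : 0 <= Q := qn_ge0 hip _.
  set t := - (Q + 1)^-1.
  have htn : t < 0 by rewrite /t oppr_lt0 invr_gt0; lra.
  have hp' : M ((- (t%:C * c)) *: m + p) by apply: Mlin.
  have E : x - ((- (t%:C * c)) *: m + p) = (x - p) + (t%:C * c) *: m.
    by rewrite scaleNr opprD opprK [_ *: m - p]addrC addrA.
  have := hdle _ hp'; rewrite E.
  have -> : qn (x - p + (t%:C * c) *: m) =
     qn (x - p) + 2 * t * mc c ^+ 2 + t ^+ 2 * mc c ^+ 2 * Q.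
    by rewrite /qnorm (qexp hip).
  move=> hh.
  set N := mc c ^+ 2 in hh.
  have hN0 : 0 <= N by exact: sqr_ge0.
  have htQ : -1 <= t * Q.
    rewrite /t mulNr lerN2 ler_pdivrMl; lra.
  have h2 : 2 * t + t ^+ 2 * Q <= t.
    have : t * (t * Q) <= t * (-1) by rewrite ler_wnM2l // ltW.
    rewrite expr2; lra.
  have hN : N <= 0.
    have h3 : 0 <= N * (2 * t + t ^+ 2 * Q) by nra.
    nra.
  apply: mc0.
  have : N == 0 by rewrite eq_le hN hN0.
  by rewrite /N sqrf_eq0 => /eqP.
by exists p.
Qed.

Lemma ipCS u v : mc (ip u v) <= ipnorm ip u * ipnorm ip v.
Proof.
have h := qCS hip u v.
have h1 : 0 <= ipnorm ip u * ipnorm ip v by rewrite mulr_ge0 // sqrtr_ge0.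
rewrite -(ler_pXn2r (n := 2)) ?nnegrE ?mc_ge0 //.
by rewrite exprMn !sqr_sqrtr ?(qn_ge0 hip).
Qed.

Lemma ipnorm_ge0 x : 0 <= ipnorm ip x.
Proof. exact: sqrtr_ge0. Qed.

Lemma ipnorm0 x : ipnorm ip x = 0 -> x = 0.
Proof.
move=> h; apply: ip_def.
have : ipnorm ip x ^+ 2 = 0 by rewrite h expr0n.
by rewrite sqr_sqrtr // (qn_ge0 hip).
Qed.

Lemma small_le (a : R) : 0 <= a -> (forall e, 0 < e -> a <= e) -> a = 0.
Proof.
move=> ha H; apply/eqP; rewrite eq_le ha andbT.
apply/ler_addgt0Pr => e he; rewrite add0r; exact: H.
Qed.

Lemma ker_closed (T : V -> V) : is_bounded_op ip T -> closed_sub (fun x => T x = 0).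
Proof.
case=> hl [K HK].
split; first exact: lin0.
split; first by move=> a x y hx hy; rewrite hl hx hy scaler0 addr0.
move=> u l hu hc.
apply: ipnorm0; apply: small_le; first exact: ipnorm_ge0.
move=> e he.
set K' := `|K| + 1.
have hK' : 0 < K' by rewrite /K'; have := normr_ge0 K; lra.
have [N HN] := hc (e / K') (divr_gt0 he hK').
have h1 := HN N (leqnn N).
have E : T l = - T (u N - l) by rewrite (linB hl) hu sub0r opprK.
rewrite E /ipnorm /qnorm (qoppl hip) (qoppr hip) opprK -/(ipnorm ip _).
apply: le_trans (HK _) _.
have hn := ipnorm_ge0 (u N - l).
have hKK : K <= K' by rewrite /K'; have := ler_norm K; lra.
have h2 : K * ipnorm ip (u N - l) <= K' * ipnorm ip (u N - l) by apply: ler_wpM2r.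
apply: le_trans h2 _.
by rewrite mulrC -ler_pdivlMr // ltW.
Qed.

Lemma riesz (f : V -> R[i]) :
  (forall a x y, f (a *: x + y) = a * f x + f y) ->
  (exists K : R, forall x, mc (f x) <= K * ipnorm ip x) ->
  exists y, forall x, f x = ip x y.
Proof.
move=> flin [K HK].
have f0 : f 0 = 0.
  by have := flin (-1) 0 0; rewrite scaleN1r oppr0 add0r mulN1r addNr.
have fD x y : f (x + y) = f x + f y by have := flin 1 x y; rewrite scale1r mul1r.
have fZ a x : f (a *: x) = a * f x by have := flin a x 0; rewrite addr0 f0 addr0.
have fB x y : f (x - y) = f x - f y by rewrite fD -scaleN1r fZ mulN1r.
have [[x0 hx0]|hno] := pselect (exists x0, f x0 != 0); last first.
  exists 0 => x; rewrite (q0r hip).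
  by apply/eqP; apply: contra_notT hno => h; exists x.
pose M := fun x => f x = 0.
have hM : closed_sub M.
  split; first exact: f0.
  split; first by move=> a x y hx hy; rewrite /M flin hx hy mulr0 addr0.
  move=> u l hu hc; rewrite /M; apply: mc0.
  apply: small_le; first exact: mc_ge0.
  move=> e he.
  set K' := `|K| + 1.
  have hK' : 0 < K' by rewrite /K'; have := normr_ge0 K; lra.
  have [N HN] := hc (e / K') (divr_gt0 he hK').
  have h1 := HN N (leqnn N).
  have E : f l = - f (u N - l) by rewrite fB hu sub0r opprK.
  rewrite E /mc normrN -/(mc _).
  apply: le_trans (HK _) _.
  have hn := ipnorm_ge0 (u N - l).
  have hKK : K <= K' by rewrite /K'; have := ler_norm K; lra.
  have h2 : K * ipnorm ip (u N - l) <= K' * ipnorm ip (u N - l) by apply: ler_wpM2r.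
  apply: le_trans h2 _.
  by rewrite mulrC -ler_pdivlMr // ltW.
have [p [Mp Hp]] := proj hM x0.
set z := x0 - p.
have fz : f z = f x0 by rewrite fB Mp subr0.
have fz0 : f z != 0 by rewrite fz.
have qz0 : ip z z != 0.
  apply/eqP => h; move/eqP: fz0; apply.
  have : z = 0 by apply: ip_def; rewrite /qnorm h.
  by move=> ->.
have qzR : (ip z z)^* = ip z z by rewrite (qnE hip) conjR.
exists (((f z / ip z z)^*) *: z) => x.
rewrite (qscaler hip) conjCK.
set c := f x / f z.
have hw : M (x - c *: z) by rewrite /M fB fZ /c divfK // subrr.
have h1 := Hp _ hw; rewrite -/z (qsubr hip) (qscaler hip) in h1.
have h2 : ip x z = c * ip z z.
  have h3 : ip z x = c^* * ip z z by apply/eqP; rewrite -subr_eq0; apply/eqP.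
  by rewrite (sip_herm hip) h3 rmorphM /= conjCK qzR.
rewrite h2 /c; field.
by apply/andP; split.
Qed.

Lemma adj_spec S : is_bounded_op ip S ->
  forall x y, ip (S x) y = ip x (adjoint ip S y).
Proof.
case=> hl [Mb HMb].
have ex : exists T : V -> V, forall x y, ip (S x) y = ip x (T y).
  have h : forall y, exists y', forall x, ip (S x) y = ip x y'.
    move=> y.
    pose f := fun x => ip (S x) y.
    have [y' Hy'] : exists y', forall x, f x = ip x y'.
      apply: riesz.
        by move=> a x z; rewrite /f hl (sip_lin hip).
      exists (Mb * ipnorm ip y) => x.
      apply: le_trans (ipCS _ _) _.
      rewrite mulrAC; apply: ler_wpM2r; [exact: ipnorm_ge0| exact: HMb].
    by exists y'.
  have [T HT] := choice h.
  by exists T => x y; exact: HT y x.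
exact: (ClassicalEpsilon.epsilon_spec (inhabits (fun x : V => x)) _ ex).
Qed.

Lemma mp_spec A : is_bounded_op ip A -> forall v, A (mp_inverse ip A (A v)) = A v.
Proof.
move=> hA v; have hl := hA.1.
have [p [Ap Hp]] := proj (ker_closed hA) v.
have ex : exists u, (forall n, A n = 0 -> ip u n = 0) /\
                    (forall z, ip (A u - A v) (A z) = 0).
  exists (v - p); split; first by move=> n hn; exact: Hp.
  by move=> z; rewrite (linB hl) Ap subr0 subrr (q0l hip).
have H := ClassicalEpsilon.epsilon_spec (inhabits (0 : V)) _ ex.
rewrite /mp_inverse; move: H.
set u := ClassicalEpsilon.epsilon _ _ => -[_ h2].
have := h2 (u - v); rewrite (linB hl) => h.
apply/eqP; rewrite -subr_eq0; apply/eqP; apply: ip_def.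
by rewrite /qnorm h.
Qed.

Lemma pos_herm A : is_positive_op ip A -> forall x y, ip (A x) y = ip x (A y).
Proof.
case=> [[hl _] hpos] x y.
rewrite [ip x (A y)](sip_herm hip).
have E1 : ip (A (x + y)) (x + y) = ip (A x) x + ip (A y) y + (ip (A x) y + ip (A y) x).
  rewrite (linD hl) !(qaddl hip) !(qaddr hip); ring.
have E2 : ip (A (x + (Complex (0:R) 1) *: y)) (x + (Complex (0:R) 1) *: y) =
   ip (A x) x + ip (A y) y + (Complex (0:R) 1) * (ip (A y) x - ip (A x) y).
  rewrite (linD hl) (linZ hl) !(qaddl hip) !(qaddr hip) !(qscalel hip) !(qscaler hip).
  have -> : (Complex (0:R) 1)^* = - Complex 0 1.
    by apply/eqP; rewrite eq_complex /= oppr0 !eqxx.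
  have hi : forall z : R[i], (Complex (0:R) 1) * (- Complex 0 1 * z) = z.
    move=> z; rewrite mulrA.
    have -> : (Complex (0:R) 1) * - Complex 0 1 = 1.
      by apply/eqP; rewrite eq_complex /=; apply/andP; split; apply/eqP; ring.
    by rewrite mul1r.
  rewrite hi.
  ring.
have h1 := ger0_Im (hpos (x + y)); rewrite E1 in h1.
have h2 := ger0_Im (hpos (x + (Complex (0:R) 1) *: y)); rewrite E2 in h2.
have h3 := ger0_Im (hpos x); have h4 := ger0_Im (hpos y).
move: h1 h2 h3 h4.
move: (ip (A x) x) (ip (A y) y) (ip (A x) y) (ip (A y) x) => [a1 b1] [a2 b2] [a3 b3] [a4 b4] /=.
move=> h1 h2 h3 h4.
apply/eqP; rewrite eq_complex /=; apply/andP; split; apply/eqP; lra.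
Qed.

End Hilb.


Section Op.
Variables (R : realType) (V : lmodType R[i]) (ip : V -> V -> R[i]) (A : V -> V).
Hypothesis Hip : is_inner_product ip.
Hypothesis Hcomp : is_complete ip.
Hypothesis HA : is_positive_op ip A.
Local Notation hip := (sip_ip Hip).
Local Notation qa := (ipA ip A).

Lemma Aherm x y : ip (A x) y = ip x (A y).
Proof. exact (pos_herm Hip HA x y). Qed.

Lemma Alin : is_linear_op A.
Proof. by case: HA => [[]]. Qed.

Lemma sip_qa : sip qa.
Proof.
split; first by move=> a x y z; rewrite /ipA Alin (sip_lin hip).
split; last by case: HA.
by move=> x y; rewrite /ipA Aherm (sip_herm hip).
Qed.

Lemma qa_congr u u' v v' : A u = A u' -> A v = A v' -> qa u v = qa u' v'.
Proof. by move=> h1 h2; rewrite /ipA h1 Aherm h2 -Aherm. Qed.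

Lemma qa_ext u u' : (forall v, qa u v = qa u' v) -> A u = A u'.
Proof.
move=> H; apply/eqP; rewrite -subr_eq0; apply/eqP; apply: (ip_def Hip).
by rewrite /qnorm (qsubl hip) -!/(ipA ip A _ _) H subrr.
Qed.

Section Sharp.
Variables (S X : V -> V).
Hypothesis hS : is_bounded_op ip S.
Hypothesis hX : is_bounded_op ip X.
Hypothesis hSX : forall x y, qa (S x) y = qa x (X y).
Local Set Default Proof Using "All".

Lemma sharp_A x : A (sharpA ip A S x) = A (X x).
Proof.
have E : adjoint ip S (A x) = A (X x).
  apply/eqP; rewrite -subr_eq0; apply/eqP; apply: (ip_def Hip).
  rewrite /qnorm.
  set d := adjoint ip S (A x) - A (X x).
  have -> : ip d d = 0; last by [].
  rewrite [in LHS]/d (qsubr hip) -(adj_spec Hip Hcomp hS) -Aherm.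
  by rewrite -/(ipA ip A _ _) hSX /ipA Aherm subrr.
rewrite /sharpA E; apply: (mp_spec Hip Hcomp).
by case: HA.
Qed.

Lemma L1 a v : qa (sharpA ip A S a) v = qa a (S v).
Proof.
rewrite (qa_congr (sharp_A a) (erefl (A v))).
by rewrite (sip_herm sip_qa) -hSX -(sip_herm sip_qa).
Qed.

Lemma L2 u v : qa (S u) (S v) = qa u (sharpA ip A S (S v)).
Proof. by rewrite (sip_herm sip_qa) -L1 -(sip_herm sip_qa). Qed.

Lemma sharpZ c a : A (sharpA ip A S (c *: a)) = A (c *: sharpA ip A S a).
Proof.
by rewrite sharp_A (linZ hX.1) (linZ Alin) -sharp_A -(linZ Alin).
Qed.

Local Notation qn := (qnorm qa).
Local Notation SS := (fun x => sharpA ip A S (S x)).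

Lemma F1 w v : qa (SS w) v = qa (S w) (S v).
Proof. exact: L1. Qed.
Lemma F2 u v : qa (S u) (S v) = qa u (SS v).
Proof. exact: L2. Qed.
Lemma F3 w v : qa (SS (SS w)) v = qa (SS w) (SS v).
Proof. by rewrite F1 F2. Qed.
Lemma F4 w : qa (SS w) w = (qn (S w))%:C.
Proof. by rewrite F1 (qnE sip_qa). Qed.
Lemma F5 w : qa (SS (SS w)) w = (qn (SS w))%:C.
Proof. by rewrite F3 (qnE sip_qa). Qed.
Lemma F6 c w : qn (S (c *: w)) = mc c ^+ 2 * qn (S w).
Proof. by rewrite (linZ hS.1) (qn_scale sip_qa). Qed.
Lemma F7 c w : qn (SS (c *: w)) = mc c ^+ 2 * qn (SS w).
Proof.
rewrite -(qn_scale sip_qa) /qnorm (linZ hS.1).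
by rewrite (qa_congr (sharpZ c (S w)) (sharpZ c (S w))).
Qed.
Lemma F8g w : qn w = 0 -> qn (S w) = 0.
Proof. by move=> h; rewrite /qnorm F2 (qCS0 sip_qa). Qed.
Lemma F8h w : qn w = 0 -> qn (SS w) = 0.
Proof. by move=> h; rewrite /qnorm F1 (qCS0 sip_qa) //; apply: F8g. Qed.

Lemma hom_bound (phi : V -> R) K :
  (forall c w, phi (c *: w) = mc c ^+ 2 * phi w) ->
  (forall w, qn w = 0 -> phi w = 0) ->
  (forall e, qn e = 1 -> phi e <= K) -> forall w, phi w <= K * qn w.
Proof.
move=> hom z1 ub w.
have hw0 := qn_ge0 sip_qa w.
have [w0|wp] := eqVneq (qn w) 0; first by rewrite w0 z1 // mulr0.
have wpos : 0 < qn w by rewrite lt_def wp hw0.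
set r := Num.sqrt (qn w).
have rpos : 0 < r by rewrite sqrtr_gt0.
set e := (r^-1)%:C *: w.
have he : qn e = 1.
  rewrite (qn_scale sip_qa) mcR ?invr_ge0 ?ltW // exprVn sqr_sqrtr //.
  by rewrite mulVf.
have Ew : w = r%:C *: e.
  by rewrite /e scalerA -rmorphM /= divff ?gt_eqF // scale1r.
have Ep : phi w = qn w * phi e.
  have hr0 : 0 <= r by apply: ltW.
  by rewrite {1}Ew hom mcR // sqr_sqrtr.
rewrite Ep [K * _]mulrC.
by apply: ler_wpM2l => //; apply: ub.
Qed.

Lemma g_bound L : 0 <= L -> (forall e, qn e = 1 -> qn (S e) <= L) ->
  forall w, qn (S w) <= L * qn w.
Proof.
move=> hL ub; apply: hom_bound => //; [exact: F6 | exact: F8g].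
Qed.

Lemma h_bound L : 0 <= L -> (forall e, qn e = 1 -> qn (S e) <= L) ->
  forall w, qn (SS w) <= L ^+ 2 * qn w.
Proof.
move=> hL ub w.
have gb := g_bound hL ub.
have hh0 := qn_ge0 sip_qa (SS w).
have hw0 := qn_ge0 sip_qa w.
have E : qa (S w) (S (SS w)) = (qn (SS w))%:C by rewrite -F1 (qnE sip_qa).
have cs := qCS sip_qa (S w) (S (SS w)).
rewrite E mcR // in cs.
have g1 := gb w; have g2 := gb (SS w).
have hg1 := qn_ge0 sip_qa (S w); have hg2 := qn_ge0 sip_qa (S (SS w)).
have h3 : qn (SS w) ^+ 2 <= (L * qn w) * (L * qn (SS w)).
  apply: le_trans cs _; apply: ler_pM => //.
have [h0|hp] := eqVneq (qn (SS w)) 0; first by rewrite h0 mulr_ge0 // sqr_ge0.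
have hpos : 0 < qn (SS w) by rewrite lt_def hp hh0.
have : qn (SS w) * qn (SS w) <= (L ^+ 2 * qn w) * qn (SS w).
  have -> : L ^+ 2 * qn w * qn (SS w) = (L * qn w) * (L * qn (SS w)) by ring.
  by rewrite -expr2.
by rewrite ler_pM2r.
Qed.

End Sharp.


Lemma sip_q0 : sip (ipA0 ip A).
Proof.
have [h1 [h2 h3]] := sip_qa.
split; first by move=> a x y z; rewrite /ipA0 /= !h1; ring.
split; first by move=> x y; rewrite /ipA0 rmorphD /= -!h2.
by move=> x; rewrite /ipA0 addr_ge0.
Qed.

Local Notation qn := (qnorm qa).
Local Notation q0 := (ipA0 ip A).
Local Notation qn0 := (qnorm (ipA0 ip A)).

Lemma mcRn (x : R) : mc (x%:C) = `|x|.
Proof. by rewrite /mc /= expr0n /= addr0 sqrtr_sqr. Qed.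

Lemma sup_ge0 (E : set R) : (forall x, E x -> 0 <= x) -> 0 <= sup E.
Proof.
move=> H.
have [hs|hn] := pselect (has_sup E); last by rewrite sup_out.
have [[x hx] _] := hs.
exact: le_trans (H x hx) (sup_upper_bound hs hx).
Qed.

Lemma normA_unit z : normA ip A z = 1 <-> qn z = 1.
Proof.
rewrite /normA; split => h; last by rewrite -/(qnorm _ _) h sqrtr1.
have h0 := qn_ge0 sip_qa z.
by rewrite -[qn z]sqr_sqrtr // -/(qnorm _ _) h expr1n.
Qed.

Lemma normA0_unit z : normA0 ip A z = 1 <-> qn0 z = 1.
Proof.
rewrite /normA0; split => h; last by rewrite -/(qnorm _ _) h sqrtr1.
have h0 := qn_ge0 sip_q0 z.
by rewrite -[qn0 z]sqr_sqrtr // -/(qnorm _ _) h expr1n.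
Qed.

Lemma omega_le (T : V -> V) :
  has_ubound [set complex.Re `|ipA ip A (T z) z| | z in [set z | normA ip A z = 1]]%classic ->
  (forall c w, mc (qa (T (c *: w)) (c *: w)) = mc c ^+ 2 * mc (qa (T w) w)) ->
  forall w, mc (qa (T w) w) <= omegaA ip A T * qn w.
Proof.
move=> hub hom.
have bid : is_bounded_op ip id by split => //; exists 1 => x; rewrite mul1r.
apply: (@hom_bound id id bid bid (fun x y => erefl)) => //.
- by move=> w hw; rewrite (qCSr sip_qa) // /mc normr0.
- move=> e he.
  apply: sup_upper_bound; last by exists e => //; apply/normA_unit.
  split => //; exists (mc (qa (T e) e)); exists e => //; exact/normA_unit.
Qed.


Lemma sup_le_gen (E : set R) b : (forall x, E x -> x <= b) -> 0 <= b -> sup E <= b.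
Proof.
move=> H hb.
have [ne|em] := pselect (E !=set0)%classic; first exact: ge_sup.
have -> : E = set0.
  apply: funext => x; apply: propext; split => // hx.
  by exfalso; apply: em; exists x.
by rewrite sup0.
Qed.

Lemma qn0E z : qn0 z = qn z.1 + qn z.2.
Proof. by rewrite /qnorm /ipA0 raddfD. Qed.

Lemma hom_helper (f : V -> R) :
  (forall c w, f (c *: w) = mc c ^+ 2 * f w) ->
  forall c w, `|f (c *: w)| = mc c ^+ 2 * `|f w|.
Proof. by move=> h c w; rewrite h normrM ger0_norm // sqr_ge0. Qed.

Section Main.
Variables B C XB XC : V -> V.
Hypotheses (hB : is_bounded_op ip B) (hXB : is_bounded_op ip XB)
  (hBX : forall x y, qa (B x) y = qa x (XB y)).
Hypotheses (hC : is_bounded_op ip C) (hXC : is_bounded_op ip XC)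
  (hCX : forall x y, qa (C x) y = qa x (XC y)).
Variables T1 T2 T3 T4 : V -> V.
Variable Y : V * V -> V * V.
Hypothesis eT1 : forall x, T1 x = sharpA ip A C (C (sharpA ip A C (C x))) + sharpA ip A C (C x).
Hypothesis eT2 : forall x, T2 x = sharpA ip A B (B x) + sharpA ip A B (B (sharpA ip A B (B x))).
Hypothesis eT3 : forall x, T3 x = sharpA ip A C (C (sharpA ip A C (C x))) - sharpA ip A C (C x).
Hypothesis eT4 : forall x, T4 x = sharpA ip A B (B x) - sharpA ip A B (B (sharpA ip A B (B x))).
Hypothesis eY : forall z, Y z = (sharpA ip A C (C (B z.2)), sharpA ip A B (B (C z.1))).

Local Notation gcn w := (qn (C w)).
Local Notation hcn w := (qn (sharpA ip A C (C w))).
Local Notation gbn w := (qn (B w)).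
Local Notation hbn w := (qn (sharpA ip A B (B w))).

Lemma E1 w : qa (T1 w) w = (hcn w + gcn w)%:C.
Proof. by rewrite eT1 (qaddl sip_qa) (F5 hC hXC hCX) (F4 hC hXC hCX) rmorphD. Qed.
Lemma E2 w : qa (T2 w) w = (gbn w + hbn w)%:C.
Proof. by rewrite eT2 (qaddl sip_qa) (F5 hB hXB hBX) (F4 hB hXB hBX) rmorphD. Qed.
Lemma E3 w : qa (T3 w) w = (hcn w - gcn w)%:C.
Proof. by rewrite eT3 (qsubl sip_qa) (F5 hC hXC hCX) (F4 hC hXC hCX) rmorphB. Qed.
Lemma E4 w : qa (T4 w) w = (gbn w - hbn w)%:C.
Proof. by rewrite eT4 (qsubl sip_qa) (F5 hB hXB hBX) (F4 hB hXB hBX) rmorphB. Qed.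

Lemma homC c w : gcn (c *: w) = mc c ^+ 2 * gcn w /\ hcn (c *: w) = mc c ^+ 2 * hcn w.
Proof. by rewrite (F6 hC hXC hCX) (F7 hC hXC hCX). Qed.
Lemma homB c w : gbn (c *: w) = mc c ^+ 2 * gbn w /\ hbn (c *: w) = mc c ^+ 2 * hbn w.
Proof. by rewrite (F6 hB hXB hBX) (F7 hB hXB hBX). Qed.

Lemma hom1 c w : mc (qa (T1 (c *: w)) (c *: w)) = mc c ^+ 2 * mc (qa (T1 w) w).
Proof.
rewrite !E1 !mcRn.
apply: (hom_helper (f := fun w => hcn w + gcn w)) => c' w'.
by have [-> ->] := homC c' w'; rewrite mulrDr.
Qed.
Lemma hom2 c w : mc (qa (T2 (c *: w)) (c *: w)) = mc c ^+ 2 * mc (qa (T2 w) w).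
Proof.
rewrite !E2 !mcRn.
apply: (hom_helper (f := fun w => gbn w + hbn w)) => c' w'.
by have [-> ->] := homB c' w'; rewrite mulrDr.
Qed.
Lemma hom3 c w : mc (qa (T3 (c *: w)) (c *: w)) = mc c ^+ 2 * mc (qa (T3 w) w).
Proof.
rewrite !E3 !mcRn.
apply: (hom_helper (f := fun w => hcn w - gcn w)) => c' w'.
by have [-> ->] := homC c' w'; rewrite mulrBr.
Qed.
Lemma hom4 c w : mc (qa (T4 (c *: w)) (c *: w)) = mc c ^+ 2 * mc (qa (T4 w) w).
Proof.
rewrite !E4 !mcRn.
apply: (hom_helper (f := fun w => gbn w - hbn w)) => c' w'.
by have [-> ->] := homB c' w'; rewrite mulrBr.
Qed.


Lemma Yab z : q0 (Y z) z =
  q0 (offdiag B C z) (sharpA ip A C (C z.1), sharpA ip A B (B z.2)).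
Proof.
rewrite eY /ipA0 /offdiag /=.
rewrite (F1 hC hXC hCX) (F2 hC hXC hCX) (F1 hB hXB hBX) (F2 hB hXB hBX).
by [].
Qed.

Lemma Sbe z : q0 (sharpA ip A C (C z.1), sharpA ip A B (B z.2)) z =
  (qn0 (offdiag B C z))%:C.
Proof.
rewrite /ipA0 /= (F4 hC hXC hCX) (F4 hB hXB hBX) qn0E /offdiag /=.
by rewrite -rmorphD addrC.
Qed.

Lemma main_ineq :
  dwA0 ip A (offdiag B C) ^+ 2 <=
    2^-1 * Num.max (omegaA ip A T1) (omegaA ip A T2)
  + 2^-1 * Num.max (omegaA ip A T3) (omegaA ip A T4)
  + omegaA0 ip A Y.
Proof.
set P1 := omegaA ip A T1; set P2 := omegaA ip A T2.
set M1 := omegaA ip A T3; set M2 := omegaA ip A T4.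
set W := omegaA0 ip A Y.
have hP1 : 0 <= P1 by apply: sup_ge0 => r [z _ <-]; exact: mc_ge0.
have hP2 : 0 <= P2 by apply: sup_ge0 => r [z _ <-]; exact: mc_ge0.
have hM1 : 0 <= M1 by apply: sup_ge0 => r [z _ <-]; exact: mc_ge0.
have hM2 : 0 <= M2 by apply: sup_ge0 => r [z _ <-]; exact: mc_ge0.
have hW : 0 <= W by apply: sup_ge0 => r [z _ <-]; exact: mc_ge0.
set Pm := Num.max P1 P2; set Mm := Num.max M1 M2.
have hPm1 : P1 <= Pm by rewrite le_max lexx.
have hPm2 : P2 <= Pm by rewrite le_max lexx orbT.
have hMm1 : M1 <= Mm by rewrite le_max lexx.
have hMm2 : M2 <= Mm by rewrite le_max lexx orbT.
set RHS := 2^-1 * Pm + 2^-1 * Mm + W.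
have hR : 0 <= RHS by rewrite /RHS; lra.
rewrite /dwA0.
set EL := [set _ | _ in _]%classic.
have hd0 : 0 <= sup EL by apply: sup_ge0 => r [z _ <-]; exact: sqrtr_ge0.
have [hub|nhub] := pselect (has_ubound EL); last first.
  rewrite sup_out; last by case.
  by rewrite expr0n.
have [L0 HL0] := hub.
set L := `|L0|.
have hL : 0 <= L by exact: normr_ge0.
have unitX : forall z, qn0 z = 1 -> qn0 (offdiag B C z) <= L.
  move=> z hz.
  set a := offdiag B C z.
  have hEL : EL (Num.sqrt (complex.Re `|ipA0 ip A a z| ^+ 2 + normA0 ip A a ^+ 4)).
    by exists z => //; apply/normA0_unit.
  have h1 := HL0 _ hEL.
  have hn := qn_ge0 sip_q0 a.
  have e4 : normA0 ip A a ^+ 4 = qn0 a ^+ 2.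
    by rewrite /normA0 -/(qnorm _ _) (exprM _ 2 2) sqr_sqrtr.
  rewrite e4 in h1.
  have h2 : Num.sqrt (qn0 a ^+ 2) <= Num.sqrt (complex.Re `|ipA0 ip A a z| ^+ 2 + qn0 a ^+ 2).
    by rewrite ler_sqrt ?addr_ge0 ?sqr_ge0 // lerDr sqr_ge0.
  rewrite sqrtr_sqr ger0_norm // in h2.
  apply: le_trans h2 _; apply: le_trans h1 _; exact: ler_norm.
have hgC : forall e, qn e = 1 -> qn (C e) <= L.
  move=> e he.
  have := unitX (e, 0); rewrite /offdiag /= (lin0 hB.1).
  have qn00 : qn 0 = 0 by rewrite /qnorm (q0l sip_qa).
  by rewrite !qn0E /= qn00 addr0 add0r he; apply.
have hgB : forall e, qn e = 1 -> qn (B e) <= L.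
  move=> e he.
  have := unitX (0, e); rewrite /offdiag /= (lin0 hC.1).
  have qn00 : qn 0 = 0 by rewrite /qnorm (q0l sip_qa).
  by rewrite !qn0E /= qn00 addr0 add0r he; apply.
have gCb := g_bound hC hXC hCX hL hgC.
have hCb := h_bound hC hXC hCX hL hgC.
have gBb := g_bound hB hXB hBX hL hgB.
have hBb := h_bound hB hXB hBX hL hgB.
have g0 w := qn_ge0 sip_qa w.
have ub1 : has_ubound [set complex.Re `|ipA ip A (T1 z) z| | z in [set z | normA ip A z = 1]]%classic.
  exists (L ^+ 2 + L) => r [w /normA_unit hw <-].
  rewrite -/(mc _) E1 mcRn ger0_norm ?addr_ge0 //.
  have := gCb w; have := hCb w; rewrite hw !mulr1; lra.
have ub2 : has_ubound [set complex.Re `|ipA ip A (T2 z) z| | z in [set z | normA ip A z = 1]]%classic.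
  exists (L ^+ 2 + L) => r [w /normA_unit hw <-].
  rewrite -/(mc _) E2 mcRn ger0_norm ?addr_ge0 //.
  have := gBb w; have := hBb w; rewrite hw !mulr1; lra.
have ub3 : has_ubound [set complex.Re `|ipA ip A (T3 z) z| | z in [set z | normA ip A z = 1]]%classic.
  exists (L ^+ 2 + L) => r [w /normA_unit hw <-].
  rewrite -/(mc _) E3 mcRn ler_norml.
  have := gCb w; have := hCb w; rewrite hw !mulr1.
  have := g0 (C w); have := g0 (sharpA ip A C (C w)).
  move=> *; apply/andP; split; lra.
have ub4 : has_ubound [set complex.Re `|ipA ip A (T4 z) z| | z in [set z | normA ip A z = 1]]%classic.
  exists (L ^+ 2 + L) => r [w /normA_unit hw <-].
  rewrite -/(mc _) E4 mcRn ler_norml.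
  have := gBb w; have := hBb w; rewrite hw !mulr1.
  have := g0 (B w); have := g0 (sharpA ip A B (B w)).
  move=> *; apply/andP; split; lra.
have o1 := omega_le ub1 hom1.
have o2 := omega_le ub2 hom2.
have o3 := omega_le ub3 hom3.
have o4 := omega_le ub4 hom4.
have Ycs : forall z, qn0 z = 1 -> mc (q0 (Y z) z) ^+ 2 <= L * L ^+ 2.
  move=> z hz.
  rewrite Yab.
  apply: le_trans (qCS sip_q0 _ _) _.
  apply: ler_pM; [apply: (qn_ge0 sip_q0) | apply: (qn_ge0 sip_q0) | by apply: unitX |].
  rewrite qn0E /= -[L ^+ 2]mulr1 -hz qn0E mulrDr.
  by apply: lerD; [apply: hCb | apply: hBb].
have ubY : has_ubound [set complex.Re `|ipA0 ip A (Y z) z| | z in [set z | normA0 ip A z = 1]]%classic.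
  exists (1 + L * L ^+ 2) => r [z /normA0_unit hz <-].
  have := Ycs z hz; rewrite -/(mc _).
  have := mc_ge0 (q0 (Y z) z); set m := mc _ => hm h.
  nra.
have oY : forall z, qn0 z = 1 -> mc (q0 (Y z) z) <= W.
  move=> z hz; apply: sup_upper_bound; last by exists z => //; apply/normA0_unit.
  split => //; exists (mc (q0 (Y z) z)); exists z => //; exact/normA0_unit.
have hsq : sup EL <= Num.sqrt RHS.
  apply: sup_le_gen; last exact: sqrtr_ge0.
  move=> r [z /normA0_unit hz <-].
  set a := offdiag B C z.
  set b := (sharpA ip A C (C z.1), sharpA ip A B (B z.2)).
  have hn := qn_ge0 sip_q0 a.
  have e4 : normA0 ip A a ^+ 4 = qn0 a ^+ 2.
    by rewrite /normA0 -/(qnorm _ _) (exprM _ 2 2) sqr_sqrtr.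
  rewrite e4 ler_sqrt // -/(mc _).
  have bo := bombieri sip_q0 a b hz.
  rewrite Sbe mcR // -Yab in bo.
  have hYW := oY z hz.
  have hz12 : qn z.1 + qn z.2 = 1 by rewrite -qn0E.
  have ea : qn0 a = gbn z.2 + gcn z.1 by rewrite qn0E.
  have eb : qn0 b = hcn z.1 + hbn z.2 by rewrite qn0E.
  have b1 := o1 z.1; rewrite E1 mcRn ger0_norm ?addr_ge0 // in b1.
  have b2 := o2 z.2; rewrite E2 mcRn ger0_norm ?addr_ge0 // in b2.
  have b3 := o3 z.1; rewrite E3 mcRn ler_norml in b3.
  have b4 := o4 z.2; rewrite E4 mcRn ler_norml in b4.
  move/andP: b3 => [b3 b3']; move/andP: b4 => [b4 b4'].
  rewrite -/P1 in b1; rewrite -/P2 in b2; rewrite -/M1 in b3 b3'; rewrite -/M2 in b4 b4'.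
  have q1 := g0 z.1; have q2 := g0 z.2.
  have k1 : P1 * qn z.1 <= Pm * qn z.1 by apply: ler_wpM2r.
  have k2 : P2 * qn z.2 <= Pm * qn z.2 by apply: ler_wpM2r.
  have k3 : M1 * qn z.1 <= Mm * qn z.1 by apply: ler_wpM2r.
  have k4 : M2 * qn z.2 <= Mm * qn z.2 by apply: ler_wpM2r.
  have kP : Pm * qn z.1 + Pm * qn z.2 = Pm by rewrite -mulrDr hz12 mulr1.
  have kM : Mm * qn z.1 + Mm * qn z.2 = Mm by rewrite -mulrDr hz12 mulr1.
  have hmax : Num.max (qn0 a) (qn0 b) <= 2^-1 * Pm + 2^-1 * Mm.
    rewrite ge_max ea eb; apply/andP; split; lra.
  rewrite /RHS; lra.
have := ler_pM hd0 hd0 hsq hsq.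
by rewrite -expr2 -expr2 sqr_sqrtr.
Qed.

End Main.
End Op.

Theorem theorem3p8 (R : realType) (V : lmodType R[i]) (ip : V -> V -> R[i])
    (A B C : V -> V) :
  is_hilbert ip ->
  is_positive_op ip A ->
  in_BA ip A B -> in_BA ip A C ->
  let CC := fun x => sharpA ip A C (C x) in
  let BB := fun x => sharpA ip A B (B x) in
  dwA0 ip A (offdiag B C) ^+ 2 <=
    2^-1 * Num.max (omegaA ip A (fun x => CC (CC x) + CC x))
                   (omegaA ip A (fun x => BB x + BB (BB x)))
  + 2^-1 * Num.max (omegaA ip A (fun x => CC (CC x) - CC x))
                   (omegaA ip A (fun x => BB x - BB (BB x)))
  + omegaA0 ip A (offdiag (fun x => CC (B x)) (fun x => BB (C x))).
Proof.
move=> [Hip Hcomp] HA [hB [XB [hXB hBX]]] [hC [XC [hXC hCX]]].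
pose CC := fun x => sharpA ip A C (C x).
pose BB := fun x => sharpA ip A B (B x).
exact: (main_ineq Hip Hcomp HA hB hXB hBX hC hXC hCX
  (T1 := fun x => CC (CC x) + CC x) (T2 := fun x => BB x + BB (BB x))
  (T3 := fun x => CC (CC x) - CC x) (T4 := fun x => BB x - BB (BB x))
  (Y := offdiag (fun x => CC (B x)) (fun x => BB (C x)))
  (fun x => erefl) (fun x => erefl) (fun x => erefl) (fun x => erefl) (fun z => erefl)).
Qed.
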